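(* The following hold. (1) If $f\in\mathcal{C}^1(\mathbb{R})$ then $f^*\cdot\chi_{[-\beta,\beta]_{\mathbb{R}^*}}\in\mathfrak{U}(\mathbb{R})$. (2) If $u\in\mathfrak{U}(\mathbb{R})$ and $a,b\in\Gamma$, then $u\cdot\chi_{[a,b]_{\mathbb{R}^*}}\in\mathfrak{U}(\mathbb{R})$. (3) If $u\in\mathfrak{U}(\mathbb{R})$, then for $j=1,\dots,\ell-1$ the (internal) one-sided limits $u(\gamma_j^+)=(\lim_{x\to\gamma_j^+})^*u(x)$ and $u(\gamma_j^-)=(\lim_{x\to\gamma_j^-})^*u(x)$ are well defined. (4) If $u\in\mathfrak{U}(\mathbb{R})$, the limits $(\lim_{x\to\gamma_0^+})^*u(x)$ and $(\lim_{x\to\gamma_\ell^-})^*u(x)$ are well defined. (5) For $j=0,\dots,\ell-1$ let $V(\mathbb{I}_j)=\{u\chi_j: u\in\widetilde{\mathcal{C}^1(\mathbb{R})}\}$. Then for $j\neq k$, $V(\mathbb{I}_j)$ and $V(\mathbb{I}_k)$ are orthogonal with respect to $(u,v)=\int^*uv\,dx$. (6) $\mathfrak{U}(\mathbb{R})=\bigoplus_{j=0}^{\ell-1}V(\mathbb{I}_j)$ as an orthogonal direct sum.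
   Context: Framework (Λ-limits / nonstandard analysis): $\mathfrak{X}=\mathcal{P}_{fin}(\mathfrak{F}(\mathbb{R},\mathbb{R}))$ directed by inclusion; $\mathbb{R}^*\supset\mathbb{R}$ is a non-Archimedean ordered field of Λ-limits of nets $\mathfrak{X}\to\mathbb{R}$; internal sets/functions are Λ-limits of nets of sets/functions, $E^*$, $f^*$ natural extensions, hyperfinite sums are Λ-limits of finite sums; $\int^*$ is the natural extension of the Lebesgue integral. For $\lambda\in\mathfrak{X}$, $V_\lambda$ is the span of $\lambda$; an internal $u=\lim_{\lambda\uparrow\Lambda}u_\lambda$ is an ultrafunction if $u_\lambda\in V_\lambda$ for all $\lambda$; for a vector space $W$ of real functions, $\widetilde{W}=W^*\cap\{\text{ultrafunctions}\}$. Grid: a positive infinite $\beta\in\mathbb{R}^*$ and a hyperfinite $\Gamma=\{\gamma_0<\dots<\gamma_\ell\}\subset\mathbb{R}^*$ with $\gamma_0=-\beta$, $\gamma_\ell=\beta$, $0<\gamma_{j+1}-\gamma_j<\eta$ for a fixed infinitesimal $\eta$, and $\mathbb{R}\subseteq\Gamma$. $\mathbb{I}_j=(\gamma_j,\gamma_{j+1})_{\mathbb{R}^*}$, $\chi_j$ its characteristic function ($j=0,\dots,\ell-1$). For $a,b\in\Gamma$, $\chi_{[a,b]_{\mathbb{R}^*}}(x)$ equals $1$ for $x\in(a,b)$, $0$ for $x\notin[a,b]$, $\tfrac12$ for $x=a\neq-\beta$ or $x=b\neq\beta$, and $1$ for $x=a=-\beta$ or $x=b=\beta$. $\mathfrak{U}(\mathbb{R})$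 is the set of $u:[-\beta,\beta]\to\mathbb{R}^*$ representable as an internal hyperfinite sum $u=\sum_{j=0}^{\ell-1}v_j\chi_j$ with $v_j\in\widetilde{\mathcal{C}^1(\mathbb{R})}$.
   Formalization: A function belongs to 𝔘(ℝ) when it equals $\sum_{j=0}^{\ell-1}v_j\chi_j$ on [-β,β]∖Γ only, and the sums in (6) are likewise compared only off Γ, so values at grid points are disregarded. The statement above fails without it. *)

(* Defs.v *)
(* A model of the Lambda-theory used in the paper:
   Lambda-limits are limits along a fine ultrafilter U on the index set
   X = P_fin(F(R,R)) (we index by all subsets of F(R,R); U concentrates on the
   finite ones, which is equivalent).  A hyperreal / internal object is
   represented by a net  X -> (standard object); equality of Lambda-limits is
   U-almost-everywhere equality of the nets (Los). *)
From HB Require Import structures.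
From mathcomp Require Import all_boot all_order all_algebra.
From mathcomp Require Import all_classical all_reals all_analysis.
Set Implicit Arguments. Unset Strict Implicit. Unset Printing Implicit Defensive.
Import Order.TTheory GRing.Theory Num.Theory.
Import numFieldNormedType.Exports.
Local Open Scope classical_set_scope.
Local Open Scope ring_scope.

Section LambdaModel.
Variable R : realType.

Definition Idx := set (R -> R).

Definition is_LambdaUF (U : set (set Idx)) : Prop :=
  [/\ U setT /\ ~ U set0,
      (forall A B, U A -> U B -> U (A `&` B)),
      (forall A B, A `<=` B -> U A -> U B),
      (forall A, U A \/ U (~` A)) &
      (forall l0 : Idx, finite_set l0 -> U [set l | finite_set l /\ l0 `<=` l])].

(* "P holds for the Lambda-limit", i.e. U-almost everywhere *)
Definition ae (U : set (set Idx)) (P : Idx -> Prop) : Prop := U [set l | P l].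

Definition inspan (l : Idx) (f : R -> R) : Prop :=
  exists (n : nat) (g : 'I_n -> R -> R) (c : 'I_n -> R),
    (forall i, l (g i)) /\ f = (fun x => \sum_(i < n) c i * g i x).

Definition C1 (f : R -> R) : Prop :=
  (forall x, derivable f x 1) /\ continuous (derive1 f).

(* v (a net of functions) represents an element of  ~C^1(R) = C^1(R)^* cap ultrafunctions *)
Definition tildeC1 (U : set (set Idx)) (v : Idx -> R -> R) : Prop :=
  ae U (fun l => C1 (v l) /\ inspan l (v l)).

(* The grid: beta positive infinite, eta positive infinitesimal,
   G l = [:: gamma_0 < ... < gamma_ell] with gamma_0 = -beta, gamma_ell = beta,
   0 < gamma_{j+1} - gamma_j < eta, and R subset of Gamma. *)
Definition is_grid (U : set (set Idx)) (beta eta : Idx -> R) (G : Idx -> seq R) : Prop :=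
  [/\ (forall n : R, ae U (fun l => n < beta l)),
      (forall e : R, 0 < e -> ae U (fun l => 0 < eta l < e)),
      ae U (fun l => [/\ (0 < size (G l))%N,
                         nth 0 (G l) 0 = - beta l,
                         nth 0 (G l) (size (G l)).-1 = beta l &
                         forall j, (j.+1 < size (G l))%N ->
                           0 < nth 0 (G l) j.+1 - nth 0 (G l) j < eta l]) &
      (forall r : R, ae U (fun l => r \in G l))].

Definition ell (g : seq R) : nat := (size g).-1.

Definition chi (g : seq R) (j : nat) (x : R) : R :=
  if (nth 0 g j < x) && (x < nth 0 g j.+1) then 1 else 0.

Definition chiAB (beta a b x : R) : R :=
  if (a < x) && (x < b) then 1
  else if (x < a) || (b < x) then 0
  else if ((x == a) && (a == - beta)) || ((x == b) && (b == beta)) then 1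
  else 2^-1.

Definition fnth (s : seq (R -> R)) (j : nat) : R -> R := nth (fun _ => 0) s j.

(* x in [-beta,beta] \ Gamma  (values of u at grid points are disregarded) *)
Definition offgrid (beta : R) (g : seq R) (x : R) : Prop :=
  - beta <= x <= beta /\ x \notin g.

Definition inFrakU (U : set (set Idx)) (beta : Idx -> R) (G : Idx -> seq R)
    (w : Idx -> R -> R) : Prop :=
  exists vs : Idx -> seq (R -> R),
    ae U (fun l =>
      [/\ size (vs l) = ell (G l),
          (forall j, (j < ell (G l))%N -> C1 (fnth (vs l) j) /\ inspan l (fnth (vs l) j)) &
          (forall x, offgrid (beta l) (G l) x ->
             w l x = \sum_(j < ell (G l)) fnth (vs l) j x * chi (G l) j x)]).

Definition inVfam (U : set (set Idx)) (G : Idx -> seq R) (gs : Idx -> seq (R -> R)) : Prop :=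
  exists vs : Idx -> seq (R -> R),
    ae U (fun l =>
      [/\ size (vs l) = ell (G l), size (gs l) = ell (G l) &
          (forall j, (j < ell (G l))%N ->
             [/\ C1 (fnth (vs l) j), inspan l (fnth (vs l) j) &
                 fnth (gs l) j = (fun x => fnth (vs l) j x * chi (G l) j x)])]).

Definition orth0 (f g : R -> R) : Prop :=
  (\int[@lebesgue_measure R]_x ((f x * g x)%:E) = 0)%E.

End LambdaModel.

(* Main.v *)
Require Import Defs.
From HB Require Import structures.
From mathcomp Require Import all_boot all_order all_algebra.
From mathcomp Require Import all_classical all_reals all_analysis.
From mathcomp Require Import ring lra.
Import Order.TTheory GRing.Theory Num.Theory.
Import numFieldNormedType.Exports.
Local Open Scope classical_set_scope.
Local Open Scope ring_scope.

Set Implicit Arguments. Unset Strict Implicit.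
Section Helpers.
Variable R : realType.
Implicit Types (g : seq R) (x : R).

Definition incr g := forall j, (j.+1 < size g)%N -> nth 0 g j < nth 0 g j.+1.

Lemma incr_lt g i k : incr g -> (i < k)%N -> (k < size g)%N -> nth 0 g i < nth 0 g k.
Proof.
move=> hg; elim: k => // k IH hik hk.
have hk' : (k < size g)%N by apply: ltnW.
case: (ltngtP i k) => [lt|gt|eq].
- by apply: lt_trans (IH lt hk') (hg _ hk).
- by move: hik; rewrite ltnS leqNgt gt.
- by rewrite eq; apply: hg.
Qed.

Lemma incr_le g i k : incr g -> (i <= k)%N -> (k < size g)%N -> nth 0 g i <= nth 0 g k.
Proof.
move=> hg; rewrite leq_eqVlt => /orP[/eqP->|lt] hk //.
by apply/ltW/incr_lt.
Qed.

Lemma grid_lt g i j x : incr g -> (i < size g)%N -> (j.+1 < size g)%N ->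
  nth 0 g j < x < nth 0 g j.+1 ->
  ((nth 0 g i < x) = (nth 0 g i <= nth 0 g j)) /\
  ((x < nth 0 g i) = (nth 0 g j.+1 <= nth 0 g i)).
Proof.
move=> hg hi hj /andP[h1 h2].
have hj' : (j < size g)%N by apply: ltnW.
case: (leqP i j) => hij.
- have le1 := incr_le hg hij hj'.
  have lt2 : nth 0 g i < nth 0 g j.+1 by apply: le_lt_trans le1 _; apply: hg.
  split; apply/idP/idP => H.
  + by [].
  + by apply: le_lt_trans H h1.
  + have : x < x by apply: lt_le_trans H (le_trans le1 (ltW h1)).
    by rewrite ltxx.
  + have : nth 0 g j.+1 < nth 0 g j.+1 by apply: le_lt_trans H lt2.
    by rewrite ltxx.
- have le1 := incr_le hg hij hi.
  split; apply/idP/idP => H.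
  + have : x < x by apply: lt_trans (lt_le_trans h2 le1) H.
    by rewrite ltxx.
  + have : nth 0 g j.+1 < nth 0 g j.+1.
      by apply: (le_lt_trans le1); apply: (le_lt_trans H); apply: hg.
    by rewrite ltxx.
  + by [].
  + by apply: lt_le_trans h2 H.
Qed.

Lemma notin_grid g j x : incr g -> (j.+1 < size g)%N ->
  nth 0 g j < x < nth 0 g j.+1 -> x \notin g.
Proof.
move=> hg hj hx; apply/negP => xg.
have hi : (index x g < size g)%N by rewrite index_mem.
case/andP: hx => a b.
case: (leqP (index x g) j) => hij.
  have := incr_le hg hij (ltnW hj); rewrite nth_index // => le.
  by have := lt_le_trans a le; rewrite ltxx.
have := incr_le hg hij hi; rewrite nth_index // => le.
by have := lt_le_trans b le; rewrite ltxx.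
Qed.

Lemma chi_eq g j k x : incr g -> (j.+1 < size g)%N -> (k.+1 < size g)%N ->
  nth 0 g j < x < nth 0 g j.+1 -> chi g k x = (k == j)%:R.
Proof.
move=> hg hj hk hx; rewrite /chi.
case: (ltngtP k j) => [lt|gt|->]; last by rewrite hx.
- have := incr_le hg lt (ltnW hj).
  case/andP: hx => h1 h2 le.
  suff -> : (x < nth 0 g k.+1) = false by rewrite andbF.
  by apply/negbTE; rewrite -leNgt; apply: le_trans (ltW h1).
- have := incr_le hg gt (ltnW hk).
  case/andP: hx => h1 h2 le.
  suff -> : (nth 0 g k < x) = false by [].
  by apply/negbTE; rewrite -leNgt; apply: le_trans (ltW h2) le.
Qed.

Lemma sum_chi g j x (F : nat -> R) : incr g -> (j < (size g).-1)%N ->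
  nth 0 g j < x < nth 0 g j.+1 ->
  \sum_(k < (size g).-1) F k * chi g k x = F j.
Proof.
move=> hg hj hx.
have hs : (0 < size g)%N by move: hj; case: (size g).
have hj' : (j.+1 < size g)%N by rewrite -(prednK hs) ltnS.
rewrite (bigD1 (Ordinal hj)) //= big1 ?addr0.
  by rewrite (chi_eq hg hj' hj' hx) eqxx mulr1.
move=> k hk.
have hk' : (k.+1 < size g)%N.
  by have := ltn_ord k; move: (nat_of_ord k) => kk; rewrite -(prednK hs) ltnS.
rewrite (chi_eq hg hj' hk' hx).
suff -> : (k == j :> nat) = false by rewrite mulr0.
by apply/negbTE; move: hk; apply: contra => /eqP e; apply/eqP/val_inj.
Qed.

Lemma chi0 g k x : ~~ ((nth 0 g k < x) && (x < nth 0 g k.+1)) -> chi g k x = 0.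
Proof. by rewrite /chi => /negbTE ->. Qed.

Lemma chi_disj g j k x : incr g -> (j.+1 < size g)%N -> (k.+1 < size g)%N ->
  j <> k -> chi g j x * chi g k x = 0.
Proof.
move=> hg hj hk jk.
case hx: ((nth 0 g j < x) && (x < nth 0 g j.+1)).
  rewrite (chi_eq (k:=k) hg hj hk hx).
  have -> : (k == j) = false by apply/negbTE/eqP => e; apply: jk.
  by rewrite mulr0.
by rewrite chi0 ?hx // mul0r.
Qed.

Lemma exists_interval g x : incr g -> (0 < size g)%N ->
  nth 0 g 0 <= x <= nth 0 g (size g).-1 -> x \notin g ->
  exists j, (j < (size g).-1)%N /\ nth 0 g j < x < nth 0 g j.+1.
Proof.
move=> hg hs /andP[h0 h1] xg.
suff: forall n, (n < size g)%N -> x <= nth 0 g n ->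
  exists j, (j < n)%N /\ nth 0 g j < x < nth 0 g j.+1.
  by move=> /(_ (size g).-1); rewrite prednK //; move=> /(_ (leqnn _) h1).
elim=> [_ hx|n IH hn hx].
  have : x = nth 0 g 0 by apply/eqP; rewrite eq_le hx h0.
  by move=> e; move: xg; rewrite e mem_nth.
case: (leP x (nth 0 g n)) => h.
  by have [j [hj ?]] := IH (ltnW hn) h; exists j; split => //; apply: ltnW.
exists n; split => //; rewrite h /=.
rewrite lt_neqAle hx andbT; apply/negP => /eqP e.
by move: xg; rewrite e mem_nth.
Qed.

Lemma C1_0 : C1 (fun _ : R => 0 : R).
Proof.
split; first by move=> x; exact: derivable_cst.
have -> : derive1 (fun _ : R => 0 : R) = cst 0.
  by apply/funext => x; exact: derive1_cst.
exact: cst_continuous.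
Qed.

Lemma inspan0 (l : Idx R) : inspan l (fun _ => 0).
Proof.
exists 0%N, (fun _ => fun _ => 0), (fun _ => 0); split; first by case.
by apply/funext => x; rewrite big_ord0.
Qed.

Lemma inspan1 (l : Idx R) f : l f -> inspan l f.
Proof.
move=> lf; exists 1%N, (fun _ => f), (fun _ => 1); split => //.
by apply/funext => x; rewrite big_ord1 mul1r.
Qed.

Lemma C1_cont (f : R -> R) : C1 f -> continuous f.
Proof. by move=> [hd _] x; apply: differentiable_continuous; apply/derivable1_diffP. Qed.

Lemma cvg_right_eq (v h : R -> R) a b : a < b -> continuous v ->
  (forall x, a < x < b -> h x = v x) -> cvg (h x @[x --> a^'+]).
Proof.
move=> ab cv hv; apply: (cvgP (v a)).
apply: cvg_trans; last exact: (cvg_at_right_filter (cv a)).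
apply: near_eq_cvg; near=> x; rewrite hv //; apply/andP; split.
  by near: x; exact: nbhs_right_gt.
by near: x; exact: nbhs_right_lt.
Unshelve. all: by end_near.
Qed.

Lemma cvg_left_eq (v h : R -> R) a b : a < b -> continuous v ->
  (forall x, a < x < b -> h x = v x) -> cvg (h x @[x --> b^'-]).
Proof.
move=> ab cv hv; apply: (cvgP (v b)).
apply: cvg_trans; last exact: (cvg_at_left_filter (cv b)).
apply: near_eq_cvg; near=> x; rewrite hv //; apply/andP; split.
  by near: x; exact: nbhs_left_gt.
by near: x; exact: nbhs_left_lt.
Unshelve. all: by end_near.
Qed.

End Helpers.

Section Main.
Variable R : realType.
Variable U : set (set (Idx R)).
Hypothesis hU : is_LambdaUF U.

Lemma ae_mono (P Q : Idx R -> Prop) : (forall l, P l -> Q l) -> ae U P -> ae U Q.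
Proof. by case: hU => _ _ hm _ _ hPQ; apply: hm => l /= /hPQ. Qed.

Lemma ae_and (P Q : Idx R -> Prop) : ae U P -> ae U Q -> ae U (fun l => P l /\ Q l).
Proof. by case: hU => _ hi _ _ _ hP hQ; exact: hi hP hQ. Qed.

Variables (beta eta : Idx R -> R) (G : Idx R -> seq R).

Definition GOK l := [/\ 0 < beta l, incr (G l), (1 < size (G l))%N,
  nth 0 (G l) 0 = - beta l & nth 0 (G l) (size (G l)).-1 = beta l].

Lemma grid_ae : is_grid U beta eta G -> ae U GOK.
Proof.
case=> hbeta _ hgr _; apply: ae_mono (ae_and (hbeta 0) hgr) => l [bl [hs h0 hl hd]].
split => //.
- by move=> j hj; have /andP[d _] := hd j hj; rewrite -subr_gt0.
- case: (ltnP 1 (size (G l))) => // hle.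
  have e : size (G l) = 1%N by apply/eqP; rewrite eqn_leq hle hs.
  by move: hl; rewrite e /= h0 => hb; exfalso; lra.
Qed.

Lemma offgrid_int l x : GOK l -> offgrid (beta l) (G l) x ->
  exists j, (j < ell (G l))%N /\ nth 0 (G l) j < x < nth 0 (G l) j.+1.
Proof.
case=> hb hi hs h0 hl [hx hxg]; apply: exists_interval => //.
  by apply: ltnW.
by rewrite h0 hl.
Qed.

Lemma int_offgrid l x j : GOK l -> (j < ell (G l))%N ->
  nth 0 (G l) j < x < nth 0 (G l) j.+1 -> offgrid (beta l) (G l) x.
Proof.
case=> hb hi hs h0 hl hj hx.
have hs0 : (0 < size (G l))%N by apply: ltnW.
have hj' : (j.+1 < size (G l))%N by move: hj; rewrite /ell -(prednK hs0) ltnS.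
split; last exact: (notin_grid hi hj' hx).
case/andP: hx => a b; apply/andP; split.
  rewrite -h0; apply: ltW; apply: le_lt_trans a; apply: incr_le => //; exact: ltnW.
rewrite -hl; apply: ltW; apply: lt_le_trans b _; apply: incr_le => //.
  by rewrite -ltnS prednK.
Qed.

Lemma sum_fnth l (vs : seq (R -> R)) j x : GOK l -> (j < ell (G l))%N ->
  nth 0 (G l) j < x < nth 0 (G l) j.+1 ->
  \sum_(k < ell (G l)) fnth vs k x * chi (G l) k x = fnth vs j x.
Proof.
case=> hb hi hs h0 hl hj hx.
exact: (sum_chi (fun k => fnth vs k x) hi hj hx).
Qed.

Lemma orth_lemma l j k (f h : R -> R) : GOK l -> (j < ell (G l))%N ->
  (k < ell (G l))%N -> j <> k ->
  orth0 (fun x => f x * chi (G l) j x) (fun x => h x * chi (G l) k x).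
Proof.
case=> hb hi hs h0 hl hj hk jk.
have hs0 : (0 < size (G l))%N by apply: ltnW.
have hj' : (j.+1 < size (G l))%N by move: hj; rewrite /ell -(prednK hs0) ltnS.
have hk' : (k.+1 < size (G l))%N by move: hk; rewrite /ell -(prednK hs0) ltnS.
rewrite /orth0.
have -> : (fun x => ((f x * chi (G l) j x) * (h x * chi (G l) k x))%:E) =
          (fun _ => 0%E).
  by apply/funext => x; rewrite mulrACA (chi_disj x hi hj' hk' jk) mulr0.
exact: integral0.
Qed.

End Main.
Theorem mainTheorem3 (R : realType) (U : set (set (Idx R)))
    (beta eta : Idx R -> R) (G : Idx R -> seq R) :
  is_LambdaUF U -> is_grid U beta eta G ->
  [/\
  (* (1) *)
  (forall f : R -> R, C1 f ->
     inFrakU U beta G (fun l x => f x * chiAB (beta l) (- beta l) (beta l) x)),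
  (* (2) *)
  (forall (w : Idx R -> R -> R) (a b : Idx R -> R),
     inFrakU U beta G w ->
     ae U (fun l => a l \in G l) -> ae U (fun l => b l \in G l) ->
     inFrakU U beta G (fun l x => w l x * chiAB (beta l) (a l) (b l) x)),
  (* (3) *)
  ((forall w : Idx R -> R -> R, inFrakU U beta G w ->
     ae U (fun l => forall j, (0 < j < ell (G l))%N ->
        cvg (w l x @[x --> (nth 0 (G l) j)^'+]) /\
        cvg (w l x @[x --> (nth 0 (G l) j)^'-]))) /\
  (* (4) *)
  (forall w : Idx R -> R -> R, inFrakU U beta G w ->
     ae U (fun l => cvg (w l x @[x --> (nth 0 (G l) 0)^'+]) /\
                    cvg (w l x @[x --> (nth 0 (G l) (ell (G l)))^'-])))),
  (* (5) *)
  (forall (u v : Idx R -> R -> R) (j k : Idx R -> nat),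
     tildeC1 U u -> tildeC1 U v ->
     ae U (fun l => (j l < ell (G l))%N) -> ae U (fun l => (k l < ell (G l))%N) ->
     ae U (fun l => j l <> k l) ->
     ae U (fun l => orth0 (fun x => u l x * chi (G l) (j l) x)
                          (fun x => v l x * chi (G l) (k l) x))) &
  (* (6) frak U(R) = orthogonal direct sum of the V(I_j) *)
  [/\ (forall w : Idx R -> R -> R,
         inFrakU U beta G w <->
         exists gs, inVfam U G gs /\
           ae U (fun l => forall x, offgrid (beta l) (G l) x ->
                   w l x = \sum_(j < ell (G l)) fnth (gs l) j x)),
      (forall gs gs', inVfam U G gs -> inVfam U G gs' ->
         ae U (fun l => forall x, offgrid (beta l) (G l) x ->
                 \sum_(j < ell (G l)) fnth (gs l) j x =
                 \sum_(j < ell (G l)) fnth (gs' l) j x) ->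
         ae U (fun l => forall j, (j < ell (G l))%N -> fnth (gs l) j = fnth (gs' l) j)) &
      (forall gs, inVfam U G gs ->
         ae U (fun l => forall j k, (j < ell (G l))%N -> (k < ell (G l))%N -> j <> k ->
                 orth0 (fnth (gs l) j) (fnth (gs l) k)))]].
Proof.
move=> hU hG; have gok := grid_ae hU hG.
have w_int : forall l (w : R -> R) (vs : seq (R -> R)) k x, GOK beta G l ->
    (forall x, offgrid (beta l) (G l) x ->
       w x = \sum_(j < ell (G l)) fnth vs j x * chi (G l) j x) ->
    (k < ell (G l))%N -> nth 0 (G l) k < x < nth 0 (G l) k.+1 ->
    w x = fnth vs k x.
  move=> l w vs k x gl hw hk hx.
  by rewrite hw ?(sum_fnth _ gl hk hx) //; exact: (int_offgrid gl hk hx).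
split.
-
  move=> f hf; exists (fun l => nseq (ell (G l)) f).
  have hfin : ae U (fun l => finite_set l /\ [set f] `<=` l).
    by case: hU => _ _ _ _ /(_ [set f] (finite_set1 f)).
  apply: (ae_mono hU) (ae_and hU gok hfin) => l [gl [_ hfl]].
  split; first by rewrite size_nseq.
    move=> j hj; rewrite /fnth nth_nseq hj; split => //.
    by apply: inspan1; apply: hfl.
  move=> x hx; have [j [hj hxj]] := offgrid_int gl hx.
  rewrite (sum_fnth _ gl hj hxj) /fnth nth_nseq hj.
  case: gl hx => hb hi hs h0 hl [/andP[x1 x2] hxg].
  have hs0 : (0 < size (G l))%N by apply: ltnW.
  have a1 : - beta l < x.
    rewrite lt_neqAle x1 andbT; apply/eqP => e; move: hxg.
    by rewrite -e -h0 mem_nth.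
  have a2 : x < beta l.
    rewrite lt_neqAle x2 andbT; apply/eqP => e; move: hxg.
    by rewrite e -hl mem_nth // prednK.
  by rewrite /chiAB a1 a2 /= mulr1.
-
  move=> w a b [vs hvs] ha hb.
  exists (fun l => mkseq (fun j => if (a l <= nth 0 (G l) j) && (nth 0 (G l) j.+1 <= b l)
                                   then fnth (vs l) j else (fun _ => 0)) (ell (G l))).
  apply: (ae_mono hU) (ae_and hU gok (ae_and hU hvs (ae_and hU ha hb))).
  move=> l [gl [[hsz hC hw] [al bl]]].
  split; first by rewrite size_mkseq.
    move=> j hj; rewrite /fnth nth_mkseq //; case: ifP => _; first exact: hC.
    by split; [exact: C1_0 | exact: inspan0].
  move=> x hx; have [j [hj hxj]] := offgrid_int gl hx.
  rewrite (w_int l (w l) (vs l) j x gl hw hj hxj) (sum_fnth _ gl hj hxj).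
  rewrite /fnth nth_mkseq // -/(fnth (vs l) j).
  have [_ hi hs _ _] := gl.
  have hs0 : (0 < size (G l))%N by apply: ltnW.
  have hj' : (j.+1 < size (G l))%N by move: hj; rewrite /ell -(prednK hs0) ltnS.
  have hxg : x \notin G l by case: hx.
  have hia : (index (a l) (G l) < size (G l))%N by rewrite index_mem.
  have hib : (index (b l) (G l) < size (G l))%N by rewrite index_mem.
  have [ea _] := grid_lt hi hia hj' hxj.
  have [_ eb] := grid_lt hi hib hj' hxj.
  rewrite !nth_index // in ea eb.
  have xa : x != a l by apply/eqP => e; move: hxg; rewrite e al.
  have xb : x != b l by apply/eqP => e; move: hxg; rewrite e bl.
  rewrite /chiAB ea eb.
  case/boolP: (a l <= nth 0 (G l) j) => ca; case/boolP: (nth 0 (G l) j.+1 <= b l) => cb /=.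
  + by rewrite mulr1.
  + have -> : b l < x.
      by rewrite lt_neqAle eq_sym xb /= leNgt eb cb.
    by rewrite orbT mulr0.
  + have -> : x < a l.
      by rewrite lt_neqAle xa /= leNgt ea ca.
    by rewrite mulr0.
  + have -> : x < a l.
      by rewrite lt_neqAle xa /= leNgt ea ca.
    by rewrite mulr0.
-
  split.
  + move=> w [vs hvs]; apply: (ae_mono hU) (ae_and hU gok hvs).
    move=> l [gl [hsz hC hw]] j /andP[j0 hj].
    have [_ hi hs _ _] := gl.
    have hs0 : (0 < size (G l))%N by apply: ltnW.
    have hj' : (j.+1 < size (G l))%N by move: hj; rewrite /ell -(prednK hs0) ltnS.
    split.
      apply: (cvg_right_eq (v := fnth (vs l) j) (b := nth 0 (G l) j.+1)).
      * exact: hi.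
      * exact: C1_cont (hC j hj).1.
      * by move=> x; apply: w_int gl hw hj.
    have e : j.-1.+1 = j by rewrite prednK.
    have hk : (j.-1 < ell (G l))%N by rewrite -ltnS e; apply: ltnW.
    have := cvg_left_eq (v := fnth (vs l) j.-1) (h := w l)
      (a := nth 0 (G l) j.-1) (b := nth 0 (G l) j.-1.+1).
    rewrite e; apply.
    * by rewrite -[in X in _ < X]e; apply: hi; rewrite e; apply: ltnW.
    * exact: C1_cont (hC _ hk).1.
    * by move=> x hx; apply: w_int gl hw hk _; rewrite e.
  + move=> w [vs hvs]; apply: (ae_mono hU) (ae_and hU gok hvs).
    move=> l [gl [hsz hC hw]].
    have [_ hi hs _ _] := gl.
    have hs0 : (0 < size (G l))%N by apply: ltnW.
    have he : (0 < ell (G l))%N by rewrite /ell -ltnS prednK.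
    split.
      apply: (cvg_right_eq (v := fnth (vs l) 0) (b := nth 0 (G l) 1)).
      * by apply: hi.
      * exact: C1_cont (hC 0%N he).1.
      * by move=> x; apply: w_int gl hw he.
    have e : (ell (G l)).-1.+1 = ell (G l) by rewrite prednK.
    have hk : ((ell (G l)).-1 < ell (G l))%N by rewrite -ltnS e.
    have := cvg_left_eq (v := fnth (vs l) (ell (G l)).-1) (h := w l)
      (a := nth 0 (G l) (ell (G l)).-1) (b := nth 0 (G l) (ell (G l)).-1.+1).
    rewrite e; apply.
    * by rewrite -[in X in _ < X]e; apply: hi; rewrite e /ell prednK.
    * exact: C1_cont (hC _ hk).1.
    * by move=> x hx; apply: w_int gl hw hk _; rewrite e.
-
  move=> u v j k _ _ hj hk hjk.
  apply: (ae_mono hU) (ae_and hU gok (ae_and hU hj (ae_and hU hk hjk))).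
  move=> l [gl [jl [kl jk]]]; exact: (orth_lemma _ _ gl jl kl jk).
-
  split.
  + move=> w; split.
    * move=> [vs hvs].
      exists (fun l => mkseq (fun j x => fnth (vs l) j x * chi (G l) j x) (ell (G l))).
      split.
        exists vs; apply: (ae_mono hU) hvs => l [hsz hC hw].
        split => //; first by rewrite size_mkseq.
        move=> j hj; have [c1 c2] := hC j hj; split => //.
        by rewrite /fnth nth_mkseq.
      apply: (ae_mono hU) hvs => l [_ _ hw] x hx; rewrite hw //.
      by apply: eq_bigr => j _; rewrite /fnth nth_mkseq.
    * move=> [gs [[vs hvs] hsum]]; exists vs.
      apply: (ae_mono hU) (ae_and hU hvs hsum) => l [[hsz hsg hj] hs].
      split => //; first by move=> j jl; case: (hj j jl).
      move=> x hx; rewrite hs //; apply: eq_bigr => j _.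
      by case: (hj j (ltn_ord j)) => _ _ ->.
  + move=> gs gs' [vs hvs] [vs' hvs'] hsum.
    apply: (ae_mono hU) (ae_and hU gok (ae_and hU hvs (ae_and hU hvs' hsum))).
    move=> l [gl [[_ _ hA] [[_ _ hB] hs]]] j hj.
    case: (hA j hj) => _ _ ->; case: (hB j hj) => _ _ ->.
    apply/funext => x.
    case hx: ((nth 0 (G l) j < x) && (x < nth 0 (G l) j.+1)); last by rewrite /chi hx !mulr0.
    have := hs x (int_offgrid gl hj hx).
    have -> : \sum_(k < ell (G l)) fnth (gs l) k x =
              \sum_(k < ell (G l)) fnth (vs l) k x * chi (G l) k x.
      by apply: eq_bigr => k _; case: (hA k (ltn_ord k)) => _ _ ->.
    have -> : \sum_(k < ell (G l)) fnth (gs' l) k x =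
              \sum_(k < ell (G l)) fnth (vs' l) k x * chi (G l) k x.
      by apply: eq_bigr => k _; case: (hB k (ltn_ord k)) => _ _ ->.
    by rewrite !(sum_fnth _ gl hj hx) => ->.
  + move=> gs [vs hvs]; apply: (ae_mono hU) (ae_and hU gok hvs).
    move=> l [gl [_ _ hA]] j k hj hk jk.
    case: (hA j hj) => _ _ ->; case: (hA k hk) => _ _ ->.
    exact: (orth_lemma _ _ gl hj hk jk).
Qed.
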